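(* Let $M,N$ be weights of $\mathbb{R}^m,\mathbb{R}^n$, let $A\in\mathbb{R}^{m\times n}$ with $MA=AN$, and let $K\subseteq\mathbb{R}^n$ be a closed cone with $A^{[\dagger]}\circ A\circ K\subseteq K$. Then $$(A^{[*]}\circ A)^{[\dagger]}\circ K^{[*]}\subseteq K+\mathcal{N}(A\circ I)\iff (A^{[*]}\circ A)^{[\dagger]}\circ K^{[*]}\subseteq K.$$
   Context: A weight is a real symmetric matrix $W$ with $W^2=I$. $\mathbb{R}^m$ and $\mathbb{R}^n$ carry weights $M\in\mathbb{R}^{m\times m}$ and $N\in\mathbb{R}^{n\times n}$, respectively. The indefinite inner product on the space with weight $W$ is $[x,y]=\langle x,Wy\rangle$. Indefinite matrix product: if $B$ has $p$ columns and $C$ has $p$ rows (or is a vector in $\mathbb{R}^p$), $p\in\{m,n\}$, and $W$ is the weight of $\mathbb{R}^p$, then $B\circ C:=BWC$. $I$ denotes an identity matrix of the appropriate size. Indefinite adjoint of $B\in\mathbb{R}^{p\times q}$: $B^{[*]}:=W_qB^TW_p$, where $W_p,W_q$ are the weights of $\mathbb{R}^p,\mathbb{R}^q$. Indefinite Moore–Penrose inverse: for $B\in\mathbb{R}^{p\times q}$, $B^{[\dagger]}$ is the unique $X\in\mathbb{R}^{q\times p}$ such that - $B\circ X\circ B=B$, - $X\circ B\circ X=X$, - $(B\circ X)^{[*]}=B\circ X$, - $(X\circ B)^{[*]}=X\circ B$. It equals $W_qB^\dagger W_p$. Range and null space: for a matrix $B$ with $q$ columns, $\mathcal{R}(B)=\{B\circ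 x:x\in\mathbb{R}^q\}$ and $\mathcal{N}(B)=\{x\in\mathbb{R}^q:B\circ x=0\}$. A cone is a nonempty set closed under addition and under multiplication by nonnegative scalars. For $S$ a subset of $\mathbb{R}^p$ with weight $W$, the dual is $S^{[*]}=\{x\in\mathbb{R}^p:[x,t]\ge0\ \forall t\in S\}$. For a matrix $B$ and a set $S$, $B\circ S=\{B\circ s:s\in S\}$. The sum of sets is the Minkowski sum. *)

(* Defs.v *)
From HB Require Import structures.
From Stdlib Require Import Reals ClassicalEpsilon FunctionalExtensionality.
From mathcomp Require Import all_boot all_algebra.

Set Implicit Arguments.
Unset Strict Implicit.
Unset Printing Implicit Defensive.

Local Open Scope R_scope.

Definition Reqb (x y : R) : bool := if Req_EM_T x y then true else false.
Lemma R_eqP : Equality.axiom Reqb.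
Proof. move=> x y; rewrite /Reqb; case: Req_EM_T => h; [exact: ReflectT | exact: ReflectF]. Qed.
HB.instance Definition _ := hasDecEq.Build R R_eqP.

Definition R_find (P : pred R) (_ : nat) : option R :=
  match excluded_middle_informative (exists x, P x) with
  | left h => Some (proj1_sig (constructive_indefinite_description _ h))
  | right _ => None
  end.

Lemma R_find_correct P n x : R_find P n = Some x -> P x.
Proof.
rewrite /R_find; case: excluded_middle_informative => // h [<-].
exact: proj2_sig (constructive_indefinite_description _ h).
Qed.

Lemma R_find_complete (P : pred R) : (exists x, P x) -> exists n, R_find P n.
Proof. by move=> h; exists 0%N; rewrite /R_find; case: excluded_middle_informative. Qed.

Lemma R_find_ext (P Q : pred R) : P =1 Q -> R_find P =1 R_find Q.
Proof.
by move=> h; have -> : P = Q by apply: functional_extensionality.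
Qed.

HB.instance Definition _ := hasChoice.Build R R_find_correct R_find_complete R_find_ext.

Lemma R_addA : associative Rplus.
Proof. by move=> x y z; rewrite Rplus_assoc. Qed.
Lemma R_addC : commutative Rplus.
Proof. exact: Rplus_comm. Qed.
Lemma R_add0 : left_id R0 Rplus.
Proof. exact: Rplus_0_l. Qed.
Lemma R_addN : left_inverse R0 Ropp Rplus.
Proof. exact: Rplus_opp_l. Qed.
HB.instance Definition _ := GRing.isZmodule.Build R R_addA R_addC R_add0 R_addN.

Lemma R_mulA : associative Rmult.
Proof. by move=> x y z; rewrite Rmult_assoc. Qed.

Lemma R1_neq0 : (R1 != R0 :> R).
Proof. by apply/eqP; exact: R1_neq_R0. Qed.

HB.instance Definition _ := GRing.Zmodule_isComNzRing.Build R
  R_mulA Rmult_comm Rmult_1_l Rmult_plus_distr_r R1_neq0.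

Lemma R_mulVf (x : R) : x != 0%R -> Rinv x * x = 1%R.
Proof. by move=> /eqP h; exact: Rinv_l. Qed.

HB.instance Definition _ := GRing.ComNzRing_isField.Build R R_mulVf Rinv_0.

Local Open Scope ring_scope.

Definition is_weight (p : nat) (W : 'M[R]_p) : Prop :=
  W^T = W /\ W *m W = 1%:M.

(* Indefinite matrix product B o C := B W C, W the weight of R^p
   (p = number of columns of B = number of rows of C). *)
Definition iprod (p q r : nat) (W : 'M[R]_p) (B : 'M[R]_(q, p)) (C : 'M[R]_(p, r))
  : 'M[R]_(q, r) := B *m W *m C.

Definition iadj (p q : nat) (Wp : 'M[R]_p) (Wq : 'M[R]_q) (B : 'M[R]_(p, q))
  : 'M[R]_(q, p) := Wq *m B^T *m Wp.

(* X is the indefinite Moore-Penrose inverse of B in R^{p x q}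
   (it is unique, and equals W_q B^dagger W_p). *)
Definition is_indef_MP (p q : nat) (Wp : 'M[R]_p) (Wq : 'M[R]_q)
  (B : 'M[R]_(p, q)) (X : 'M[R]_(q, p)) : Prop :=
  [/\ iprod Wp (iprod Wq B X) B = B,
      iprod Wq (iprod Wp X B) X = X,
      iadj Wp Wp (iprod Wq B X) = iprod Wq B X &
      iadj Wq Wq (iprod Wp X B) = iprod Wp X B].

Definition vset (p : nat) := 'cV[R]_p -> Prop.

Definition iinner (p : nat) (W : 'M[R]_p) (x y : 'cV[R]_p) : R :=
  (x^T *m W *m y) ord0 ord0.

Definition idual (p : nat) (W : 'M[R]_p) (S : vset p) : vset p :=
  fun x => forall t, S t -> Rle 0%R (iinner W x t).

Definition iimage (p q : nat) (W : 'M[R]_p) (B : 'M[R]_(q, p)) (S : vset p) : vset q :=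
  fun y => exists2 s, S s & y = iprod W B s.

Definition inull (p q : nat) (W : 'M[R]_p) (B : 'M[R]_(q, p)) : vset p :=
  fun x => iprod W B x = 0.

Definition msum (p : nat) (S T : vset p) : vset p :=
  fun z => exists s t, S s /\ T t /\ z = s + t.

Definition vsubset (p : nat) (S T : vset p) : Prop := forall x, S x -> T x.

Definition is_cone (p : nat) (K : vset p) : Prop :=
  [/\ exists x, K x,
      forall x y, K x -> K y -> K (x + y) &
      forall (a : R) x, Rle 0%R a -> K x -> K (a *: x)].

(* Closed in the usual (Euclidean) topology of R^p; expressed with the
   sup-norm, which induces the same topology. *)
Definition is_closed (p : nat) (K : vset p) : Prop :=
  forall x : 'cV[R]_p,
    (forall eps : R, Rlt 0%R eps ->
       exists2 k, K k & forall i : 'I_p, Rlt (Rabs (x i ord0 - k i ord0)) eps) ->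
    K x.

(* Main.v *)
Require Import Defs.
From HB Require Import structures.
From Stdlib Require Import Reals.
From mathcomp Require Import all_boot all_algebra.

Import GRing.Theory.
Local Open Scope ring_scope.

Lemma key m n (M : 'M[R]_m) (N : 'M[R]_n) (A : 'M[R]_(m, n)) (X : 'M[R]_(n, m)) (Y : 'M[R]_n) :
  M^T = M -> M *m M = 1%:M -> N^T = N -> N *m N = 1%:M ->
  iadj N N (iprod M X A) = iprod M X A ->
  iprod M (iprod N A X) A = A ->
  iprod N (iprod N Y (iprod M (iadj M N A) A)) Y = Y ->
  iadj N N (iprod N Y (iprod M (iadj M N A) A)) = iprod N Y (iprod M (iadj M N A) A) ->
  X *m M *m A *m N *m Y = Y.
Proof.
rewrite /iadj /iprod => MT MM NT NN X4 X1 Y1 Y4.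
have hB0 : N *m A^T *m M *m M *m A = N *m A^T *m A by rewrite -(mulmxA _ M M) MM mulmx1.
rewrite hB0 in Y1 Y4.
have hC : Y *m N *m (N *m A^T *m A) = Y *m A^T *m A
  by rewrite !mulmxA -(mulmxA Y N N) NN mulmx1.
rewrite hC in Y1 Y4.
have hY : Y = N *m A^T *m A *m Y^T *m Y.
  rewrite -{1}Y1 -Y4 -(mulmxA _ N N) NN mulmx1.
  by rewrite !trmx_mul trmxK !mulmxA.
have hXA : X *m M *m A *m A^T = N *m A^T.
  have h1 := congr1 trmx X1.
  rewrite !trmx_mul MT NT !mulmxA in h1.
  rewrite -X4 !trmx_mul MT -!mulmxA.
  by congr (N *m _); rewrite !mulmxA h1.
rewrite {1}hY !mulmxA -(mulmxA _ N N) NN mulmx1 hXA.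
exact: esym hY.
Qed.

Theorem lemma3p14 (m n : nat) (M : 'M[R]_m) (N : 'M[R]_n) (A : 'M[R]_(m, n))
  (Adag : 'M[R]_(n, m)) (Y : 'M[R]_n) (K : vset n) :
  is_weight M -> is_weight N ->
  M *m A = A *m N ->
  is_indef_MP M N A Adag ->
  is_indef_MP N N (iprod M (iadj M N A) A) Y ->
  is_cone K -> is_closed K ->
  vsubset (iimage M Adag (iimage N A K)) K ->
  (vsubset (iimage N Y (idual N K))
           (msum K (inull N (iprod N A (1%:M : 'M[R]_n))))
   <-> vsubset (iimage N Y (idual N K)) K).
Proof.
move=> [MT MM] [NT NN] MA [X1 X2 X3 X4] [Y1 Y2 Y3 Y4] _ _ Hinv.
have hk := @key _ _ M N A Adag Y MT MM NT NN X4 X1 Y2 Y4.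
split => H y Hy; last first.
  exists y, 0; split; first exact: H.
  split; last by rewrite addr0.
  by rewrite /inull /iprod mulmx0.
have [k [t [Kk [Nt E]]]] := H _ Hy.
case: Hy => s Ks Ey.
have -> : y = Adag *m M *m A *m N *m y by rewrite Ey /iprod !mulmxA hk.
rewrite E mulmxDr.
have -> : Adag *m M *m A *m N *m t = 0.
  move: Nt; rewrite /inull /iprod mulmx1 => Nt.
  rewrite -(mulmxA A N N) NN mulmx1 in Nt.
  by rewrite -(mulmxA Adag M A) MA -!mulmxA (mulmxA N N t) NN mul1mx Nt mulmx0.
rewrite addr0; apply: Hinv; exists (iprod N A k); first by exists k.
by rewrite /iprod !mulmxA.
Qed.
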